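(* Assume the standing assumptions, and let $p_0:(0,\infty)\to(0,\infty)$ be the inverse function of $\mathcal L$, i.e. $\mathcal L(p_0(z))=z$. Then $p_0$ is strictly superadditive: $$p_0(x+y)>p_0(x)+p_0(y)\qquad\text{for all } x,y>0.$$ In particular, $p_0(n\beta)>\sum_{j=1}^k p_0(m_j\beta)$ whenever $\beta>0$, $k\ge2$, $m_1,\dots,m_k\in\mathbb N$ and $n=m_1+\dots+m_k$.
   Context: Standing assumptions: $k:(0,\infty)\to[0,\infty)$ is locally integrable, its Laplace transform $\mathcal K(p)=\int_0^\infty e^{-pt}k(t)\,dt$ is finite for $p>0$ and is a Stieltjes function, and $\mathcal L(p)=p\mathcal K(p)$. Moreover $\mathcal K(p)\to\infty$ as $p\to0^+$, $\mathcal K(p)\to0$ as $p\to\infty$, $\mathcal L(p)\to0$ as $p\to0^+$, and $\mathcal L(p)\to\infty$ as $p\to\infty$. A Stieltjes function is $\varphi(\lambda)=a/\lambda+b+\int_{[0,\infty)}\frac{\sigma(dt)}{\lambda+t}$ with $a,b\ge0$ and $\sigma$ a Borel measure on $[0,\infty)$ with $\int(1+t)^{-1}\sigma(dt)<\infty$. Under these assumptions $\mathcal L(p)=\int_{[0,\infty)}\frac{p}{p+t}\sigma(dt)$ for such a measure, and $\mathcal L$ is a strictly increasing bijection of $(0,\infty)$ onto itself. *)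

(* Defs.v *)
From HB Require Import structures.
From mathcomp Require Import all_boot all_order all_algebra.
From mathcomp Require Import all_classical all_reals all_analysis.
Set Implicit Arguments. Unset Strict Implicit. Unset Printing Implicit Defensive.
Import Order.TTheory GRing.Theory Num.Theory.
Import numFieldNormedType.Exports.
Local Open Scope classical_set_scope.
Local Open Scope ring_scope.

Definition locally_integrable_pos (R : realType) (k : R -> R) : Prop :=
  forall a b : R, 0 < a -> a < b ->
    (@lebesgue_measure R).-integrable `[a, b] (EFin \o k).

Definition laplace_finite (R : realType) (k : R -> R) (p : R) : Prop :=
  (@lebesgue_measure R).-integrable `]0%R, +oo[
     (fun t => (expR (- (p * t)) * k t)%:E).

Definition laplaceK (R : realType) (k : R -> R) (p : R) : R :=
  fine (\int[@lebesgue_measure R]_(t in `]0%R, +oo[) (expR (- (p * t)) * k t)%:E)%E.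

Definition laplaceL (R : realType) (k : R -> R) (p : R) : R := p * laplaceK k p.

(* Stieltjes function on (0,oo):
   phi(l) = a/l + b + int_[0,oo) sigma(dt)/(l+t), a,b >= 0,
   sigma a Borel measure on [0,oo) (only its restriction to [0,oo) is used)
   with int_[0,oo) (1+t)^{-1} sigma(dt) < oo. *)
Definition stieltjes (R : realType) (phi : R -> R) : Prop :=
  exists (a b : R) (sigma : {measure set R -> \bar R}),
    [/\ 0 <= a, 0 <= b,
        (\int[sigma]_(t in `[0%R, +oo[) ((1 + t)^-1)%:E < +oo)%E &
        forall l : R, 0 < l ->
          phi l = a / l + b + fine (\int[sigma]_(t in `[0%R, +oo[) ((l + t)^-1)%:E)%E].

(* Main.v *)
Require Import Defs.
From HB Require Import structures.
From mathcomp Require Import all_boot all_order all_algebra.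
From mathcomp Require Import all_classical all_reals all_analysis.
From mathcomp Require Import ring lra.
Import Order.TTheory GRing.Theory Num.Theory.
Import numFieldNormedType.Exports.
Local Open Scope classical_set_scope.
Local Open Scope ring_scope.

Lemma mg (R : realType) (l : R) : 0 <= l ->
  measurable_fun (`[0%R, +oo[%classic : set R) (fun t : R => (l + t)^-1).
Proof.
move=> l0.
apply: (eq_measurable_fun (fun t => (l + t) `^ (-1))).
  move=> t; rewrite inE /= in_itv /= andbT => t0.
  by rewrite powR_inv1 // addr_ge0.
apply: measurable_funTS.
apply: (@measurableT_comp _ _ _ _ _ _ (fun x : R => x `^ (-1)) _ (fun t => l + t)).
  exact: measurable_realfun.measurable_powR.
exact: measurable_realfun.measurable_funD.
Qed.

Lemma mgc (R : realType) (c l : R) : 0 <= l ->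
  measurable_fun (`[0%R, +oo[%classic : set R) (fun t : R => c * (l + t)^-1).
Proof.
move=> l0; apply: measurable_realfun.measurable_funM => //; exact: mg.
Qed.

Lemma inD (R : realType) (t : R) : (`[0%R, +oo[%classic : set R) t -> 0 <= t.
Proof. by rewrite /= in_itv /= andbT. Qed.

Lemma hpos (R : realType) (P Q t : R) : 0 < P -> 0 < Q -> 0 <= t ->
  (P + Q) * (P + Q + t)^-1 < P * (P + t)^-1 + Q * (Q + t)^-1.
Proof.
move=> P0 Q0 t0.
rewrite mulrDl; apply: ler_ltD.
  rewrite ler_pM2l // lef_pV2 ?posrE; try lra.
rewrite ltr_pM2l // ltf_pV2 ?posrE; lra.
Qed.


Notation DD := (`[0%R, +oo[%classic : set _).

Lemma ptw1 (R : realType) (l t : R) : 0 < l -> 0 <= t ->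
  (l + t)^-1 <= (1 + l^-1) * (1 + t)^-1.
Proof.
move=> l0 t0.
rewrite ler_pdivlMr; last lra.
rewrite mulrC ler_pdivrMr; last lra.
rewrite mulrDl mul1r mulrDr mulVf; last by rewrite gt_eqF.
have : 0 <= l^-1 * t by rewrite mulr_ge0 // invr_ge0 ltW.
lra.
Qed.

Lemma J_fin (R : realType) (mu : {measure set R -> \bar R})
  (hfin : (\int[mu]_(t in DD) ((1 + t)^-1)%:E < +oo)%E) (l : R) : 0 < l ->
  (\int[mu]_(t in DD) ((l + t)^-1)%:E)%E \is a fin_num.
Proof.
move=> l0.
rewrite ge0_fin_numE; last first.
  by apply: integral_ge0 => t /inD t0; rewrite lee_fin invr_ge0 addr_ge0 // ltW.
apply: (le_lt_trans (y := ((1 + l^-1)%:E * \int[mu]_(t in DD) ((1 + t)^-1)%:E)%E)).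
  rewrite -ge0_integralZl_EFin //; last 3 first.
  - by move=> t /inD t0; rewrite lee_fin invr_ge0; lra.
  - apply/measurable_realfun.measurable_EFinP.
    by apply: mg.
  - by rewrite addr_ge0 // invr_ge0 ltW.
  apply: ge0_le_integral => //.
  - by move=> t /inD t0; rewrite lee_fin invr_ge0 addr_ge0 // ltW.
  - apply/measurable_realfun.measurable_EFinP.
    by apply: mg; rewrite ltW.
  - by apply/measurable_realfun.measurable_EFinP; apply: mgc.
  - by move=> t /inD t0; rewrite -EFinM lee_fin ptw1.
apply: lte_mul_pinfty => //; rewrite lee_fin addr_ge0 // invr_ge0 ltW //.
Qed.

Definition Jv (R : realType) (mu : {measure set R -> \bar R}) (l : R) : R :=
  fine (\int[mu]_(t in DD) ((l + t)^-1)%:E)%E.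
Arguments Jv {R}.

Lemma uJ (R : realType) (mu : {measure set R -> \bar R})
  (hfin : (\int[mu]_(t in DD) ((1 + t)^-1)%:E < +oo)%E) (u : R) : 0 < u ->
  (u * Jv mu u)%:E = (\int[mu]_(t in DD) (u * (u + t)^-1)%:E)%E.
Proof.
move=> u0; rewrite EFinM /Jv fineK; last exact: J_fin.
rewrite -ge0_integralZl_EFin //.
all: try (by apply: eq_integral => t _; rewrite EFinM).
all: try (by move=> t /inD t0; rewrite lee_fin invr_ge0 addr_ge0 // ltW).
all: try (by apply/measurable_realfun.measurable_EFinP; apply: mg; rewrite ltW).
all: try (by rewrite ltW).
Qed.

Lemma ptw2 (R : realType) (u v t : R) : 0 < u -> u <= v -> 0 <= t ->
  u * (u + t)^-1 <= v * (v + t)^-1.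
Proof.
move=> u0 uv t0.
rewrite ler_pdivrMr; last lra.
rewrite mulrAC ler_pdivlMr; last lra.
nra.
Qed.

Lemma Jmono (R : realType) (mu : {measure set R -> \bar R})
  (hfin : (\int[mu]_(t in DD) ((1 + t)^-1)%:E < +oo)%E) (u v : R) : 0 < u -> u <= v ->
  u * Jv mu u <= v * Jv mu v.
Proof.
move=> u0 uv; rewrite -lee_fin uJ // uJ; last lra.
apply: ge0_le_integral => //.
all: try (by move=> t /inD t0; rewrite lee_fin mulr_ge0 ?invr_ge0 ?addr_ge0 // ltW).
all: try (by apply/measurable_realfun.measurable_EFinP; apply: mgc; rewrite ltW).
all: try (by apply/measurable_realfun.measurable_EFinP; apply: mgc; lra).
all: try (by move=> t /inD t0; rewrite lee_fin ptw2).
exact: hfin.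
Qed.

Lemma Jzero (R : realType) (mu : {measure set R -> \bar R}) (l : R) :
  mu DD = 0%E -> 0 < l -> Jv mu l = 0.
Proof.
move=> m0 l0; rewrite /Jv.
rewrite (_ : (\int[mu]_(t in DD) ((l + t)^-1)%:E)%E =
   (\int[mu]_(t in DD) `|((l + t)^-1)%:E|)%E); last first.
  apply: eq_integral => t /[!inE] /inD t0.
  by rewrite gee0_abs // lee_fin invr_ge0 addr_ge0 // ltW.
rewrite integral_abs_eq0 //.
by apply/measurable_realfun.measurable_EFinP; apply: mg; rewrite ltW.
Qed.

Lemma Jsub (R : realType) (mu : {measure set R -> \bar R})
  (hfin : (\int[mu]_(t in DD) ((1 + t)^-1)%:E < +oo)%E) (P Q : R) : 0 < P -> 0 < Q ->
  exists h0, [/\ 0 <= h0,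
    P * Jv mu P + Q * Jv mu Q = (P + Q) * Jv mu (P + Q) + h0 &
    (h0 = 0 -> mu DD = 0%E)].
Proof.
move=> P0 Q0.
pose h t := P * (P + t)^-1 + Q * (Q + t)^-1 - (P + Q) * (P + Q + t)^-1.
have hp t : 0 <= t -> 0 < h t.
  by move=> t0; rewrite /h subr_gt0 hpos.
have mh : measurable_fun (DD : set R) h.
  apply: measurable_realfun.measurable_funB.
    apply: measurable_realfun.measurable_funD; apply: mgc; rewrite ltW //.
  by apply: mgc; rewrite ltW // addr_gt0.
pose H := (\int[mu]_(t in DD) (h t)%:E)%E.
have H0 : (0 <= H)%E.
  by apply: integral_ge0 => t /inD t0; rewrite lee_fin ltW // hp.
have E1 : ((P * Jv mu P + Q * Jv mu Q)%:E =
    \int[mu]_(t in DD) (P * (P + t)^-1 + Q * (Q + t)^-1)%:E)%E.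
  rewrite EFinD uJ // uJ //.
  rewrite -ge0_integralD //.
  all: try (by apply: eq_integral => t _; rewrite EFinD).
  all: try (by move=> t /inD t0; rewrite lee_fin mulr_ge0 ?invr_ge0 ?addr_ge0 // ltW).
  all: try (by apply/measurable_realfun.measurable_EFinP; apply: mgc; rewrite ltW).
have E2 : (\int[mu]_(t in DD) (P * (P + t)^-1 + Q * (Q + t)^-1)%:E =
    ((P + Q) * Jv mu (P + Q))%:E + H)%E.
  rewrite uJ; last by rewrite addr_gt0.
  rewrite -ge0_integralD //.
  all: try (by apply: eq_integral => t _; rewrite -EFinD /h; congr EFin; ring).
  all: try (by move=> t /inD t0; rewrite lee_fin mulr_ge0 ?invr_ge0 ?addr_ge0 // ltW).
  all: try (by apply/measurable_realfun.measurable_EFinP; apply: mgc; rewrite ltW // addr_gt0).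
  all: try (by move=> t /inD t0; rewrite lee_fin ltW // hp).
  all: try (by apply/measurable_realfun.measurable_EFinP).
  all: try exact: hfin.
move: E2; rewrite -E1.
set S := P * Jv mu P + Q * Jv mu Q.
set C := (P + Q) * Jv mu (P + Q).
move: H0; case HE: H => [r| |] // H0.
- move=> /eqP; rewrite -EFinD eqe => /eqP SE.
  exists r; split => //.
  move=> r0.
  have Hz : H = 0%E by rewrite HE r0.
  have : (\int[mu]_(t in DD) `|(h t)%:E|)%E = 0%E.
    rewrite -Hz; apply: eq_integral => t /[!inE] /inD t0.
    by rewrite gee0_abs // lee_fin ltW // hp.
  move=> Habs.
  have [N [mN muN DN]] : ae_eq mu (DD : set R) (fun t => (h t)%:E) (cst 0%E).
    apply/(ae_eq_integral_abs mu (measurable_itv _)) => //.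
    by apply/measurable_realfun.measurable_EFinP.
  apply: (subset_measure0 _ _ _ muN) => //.
  move=> t Dt; apply: DN => /= HH.
  have := HH Dt; move=> /eqP; rewrite /= eqe.
  by rewrite gt_eqF // hp // inD.
Qed.

Lemma sum_pos (R : realType) n (x : 'I_n.+1 -> R) : (forall j, 0 < x j) ->
  0 < \sum_(j < n.+1) x j.
Proof.
move=> xp; rewrite big_ord_recl; apply: ltr_pwDl => //.
by apply: sumr_ge0 => i _; apply: ltW.
Qed.

Lemma sum_step (R : realType) (p0 : R -> R)
  (sup : forall x y, 0 < x -> 0 < y -> p0 x + p0 y < p0 (x + y)) :
  forall n (x : 'I_n.+2 -> R), (forall j, 0 < x j) ->
  \sum_(j < n.+2) p0 (x j) < p0 (\sum_(j < n.+2) x j).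
Proof.
elim=> [|n IH] x xp.
  by rewrite !big_ord_recr !big_ord0 /= !add0r; apply: sup.
rewrite big_ord_recr /= [in X in _ < X]big_ord_recr /=.
apply: (lt_trans (y := p0 (\sum_(i < n.+2) x (widen_ord (leqnSn n.+2) i)) + p0 (x ord_max))).
  by rewrite ltrD2r; apply: IH.
apply: sup => //; apply: sum_pos => j; exact: xp.
Qed.

Theorem lemma4p1 (R : realType) (k : R -> R) (p0 : R -> R)
  (k_ge0 : forall t : R, 0 < t -> 0 <= k t)
  (k_loc : locally_integrable_pos k)
  (K_fin : forall p : R, 0 < p -> laplace_finite k p)
  (K_stieltjes : stieltjes (laplaceK k))
  (K_0 : laplaceK k x @[x --> 0^'+] --> +oo)
  (K_oo : laplaceK k x @[x --> +oo] --> 0)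
  (L_0 : laplaceL k x @[x --> 0^'+] --> 0)
  (L_oo : laplaceL k x @[x --> +oo] --> +oo)
  (p0_pos : forall z : R, 0 < z -> 0 < p0 z)
  (p0_inv : forall z : R, 0 < z -> laplaceL k (p0 z) = z) :
  (forall x y : R, 0 < x -> 0 < y -> p0 (x + y) > p0 x + p0 y) /\
  (forall (beta : R) (n : nat) (m : 'I_n -> nat),
      0 < beta -> (2 <= n)%N -> (forall j, (0 < m j)%N) ->
      p0 ((\sum_(j < n) m j)%N%:R * beta) > \sum_(j < n) p0 ((m j)%:R * beta)).
Proof.
move: K_stieltjes => [a [b [sigma [ha hb hfin hrep]]]].
have LE l : 0 < l -> laplaceL k l = a + b * l + l * Jv sigma l.
  move=> l0; rewrite /laplaceL hrep // /Jv.
  rewrite !mulrDr mulrC divfK ?gt_eqF //; ring.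
have Lmono u v : 0 < u -> u <= v -> laplaceL k u <= laplaceL k v.
  move=> u0 uv; rewrite !LE //; last lra.
  have := @Jmono _ _ hfin _ _ u0 uv.
  have : b * u <= b * v by rewrite ler_wpM2l.
  lra.
have Lsub P Q : 0 < P -> 0 < Q -> laplaceL k (P + Q) < laplaceL k P + laplaceL k Q.
  move=> P0 Q0; have [h0 [h00 hE hz]] := @Jsub _ _ hfin _ _ P0 Q0.
  rewrite !LE // ?addr_gt0 //.
  have [a0|a0] : a = 0 \/ 0 < a by move: ha; rewrite le_eqVlt => /orP[/eqP ->|]; [left|right].
  - have [h0z|h0p] : h0 = 0 \/ 0 < h0 by move: h00; rewrite le_eqVlt => /orP[/eqP ->|]; [left|right].
    + exfalso.
      have m0 := hz h0z.
      have KE l : 0 < l -> laplaceK k l = b.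
        move=> l0; rewrite hrep // a0.
        rewrite (_ : fine _ = 0); first by rewrite mul0r add0r addr0.
        exact: (@Jzero _ _ _ m0 l0).
      have Kb : laplaceK k x @[x --> +oo] --> b.
        apply: cvg_near_cst; near=> x; apply: KE; near: x.
        by apply: nbhs_pinfty_gt; rewrite num_real.
      have b0 : b = 0 := cvg_unique (@Rhausdorff R) Kb K_oo.
      have := p0_inv 1 ltr01.
      by rewrite /laplaceL KE ?p0_pos // b0 mulr0 => /eqP; rewrite eq_sym oner_eq0.
    + rewrite a0; nra.
  - nra.
split.
  move=> x y x0 y0.
  rewrite ltNge; apply/negP => hle.
  have := Lmono _ _ (p0_pos _ (addr_gt0 x0 y0)) hle.
  have := Lsub _ _ (p0_pos _ x0) (p0_pos _ y0).
  rewrite !p0_inv ?addr_gt0 //.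
  lra.
move=> beta n m b0 n2 mpos.
case: n m n2 mpos => [|[|n]] m n2 mpos //.
rewrite natr_sum mulr_suml.
have sup : forall x y, 0 < x -> 0 < y -> p0 x + p0 y < p0 (x + y).
  move=> x y x0 y0.
  rewrite ltNge; apply/negP => hle.
  have := Lmono _ _ (p0_pos _ (addr_gt0 x0 y0)) hle.
  have := Lsub _ _ (p0_pos _ x0) (p0_pos _ y0).
  rewrite !p0_inv ?addr_gt0 //.
  lra.
apply: (@sum_step R p0 sup n (fun j => (m j)%:R * beta)).
by move=> j; rewrite mulr_gt0 // ltr0n.
Unshelve. all: by end_near.
Qed.
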